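(* Let $n,m\ge1$, let $\mathfrak{g}$ be of type $B_n$, and let $\lambda=\sum_{i=1}^n c_i\epsilon_i$ be a dominant integral weight with all $c_i\in\mathbb{Z}$ (so $c_1\ge c_2\ge\cdots\ge c_n\ge 0$ are integers). The multiplicity of $V(\lambda)$ in $V(\omega_n)^{\otimes 2m}$ (equivalently, of $B(\lambda)$ in $B(\omega_n)^{\otimes 2m}$) equals the determinant of the $n\times n$ matrix \[ \left[\operatorname{Cat}_{(a(i,j),\,b(i,j))}\right]_{i,j=1}^n,\qquad a(i,j)=2n-i-j+m+c_j,\quad b(i,j)=j-i+m-c_j. \]
   Context: For type $B_n$ ($\mathfrak{so}_{2n+1}$), weights are written in the basis $\epsilon_1,\dots,\epsilon_n$ and $V(\omega_n)$ is the spin representation with highest weight $\omega_n=\tfrac12(\epsilon_1+\cdots+\epsilon_n)$. The Catalan triangle numbers are $\operatorname{Cat}_{(a,b)}=\binom{a+b}{b}-\binom{a+b}{b-1}$ for $0\le b\le a$ and $\operatorname{Cat}_{(a,b)}=0$ if $b<0$ or $b>a$ (equivalently, the number of lattice paths from $(0,0)$ to $(a,b)$ with unit steps $(1,0)$ and $(0,1)$ staying weakly below the line $y=x$). *)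

(* Defs.v *)
From HB Require Import structures.
From mathcomp Require Import all_boot all_order all_algebra.
Set Implicit Arguments. Unset Strict Implicit. Unset Printing Implicit Defensive.
Import Order.TTheory GRing.Theory Num.Theory.
Local Open Scope ring_scope.

(* For naturals b <= a: Cat_(a,b) = C(a+b,b) - C(a+b,b-1), with C(_, -1) = 0. *)
Definition catn (a b : nat) : nat :=
  if b == 0%N then 1%N else ('C(a + b, b) - 'C(a + b, b.-1))%N.

Definition Cat (a b : int) : int :=
  if (0 <= b) && (b <= a) then (catn `|a|%N `|b|%N)%:Z else 0.

(* Weights are functions nat -> rat, coordinate k (k < n) being the
   coefficient of epsilon_(k+1).  Simple roots are indexed by i < n:
   alpha_(i+1) = eps_(i+1) - eps_(i+2) for i+1 < n, alpha_n = eps_n. *)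
Definition hpair (n i : nat) (mu : nat -> rat) : rat :=
  if (i.+1 < n)%N then mu i - mu i.+1 else 2 * mu i.

(* Elements: sign vectors s in {+,-}^n, encoded as seq bool of size n
   (true = +); weight (1/2) sum_k s_k eps_k. *)
Definition wt_spin (n : nat) (s : seq bool) : nat -> rat :=
  fun k => if (k < n)%N then (if nth false s k then 1/2 else -(1/2)) else 0.

Definition e_spin (n i : nat) (s : seq bool) : option (seq bool) :=
  if (i.+1 < n)%N then
    (if ~~ nth false s i && nth false s i.+1
     then Some (set_nth false (set_nth false s i true) i.+1 false) else None)
  else if ~~ nth false s i then Some (set_nth false s i true) else None.

(* eps_i(b) = max{k | e_i^k b defined}; all i-strings in B(omega_n) have
   length <= 1, so eps_i(b) = 1 if e_i b is defined and 0 otherwise. *)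
Definition eps_spin (n i : nat) (s : seq bool) : rat :=
  if e_spin n i s is Some _ then 1 else 0.

(* A word [:: b1; ...; bN] stands for b1 (x) b2 (x) ... (x) bN
   = (...((b1 (x) b2) (x) b3) ...) (x) bN.  The functions below take the
   REVERSED word r = [:: bN; ...; b1]. *)
Fixpoint wt_r (n : nat) (r : seq (seq bool)) : nat -> rat :=
  match r with
  | [::] => fun _ => 0
  | b :: r' => fun k => wt_r n r' k + wt_spin n b k
  end.

Fixpoint eps_r (n i : nat) (r : seq (seq bool)) : rat :=
  match r with
  | [::] => 0
  | b :: r' => Num.max (eps_r n i r') (eps_spin n i b - hpair n i (wt_r n r'))
  end.

Definition phi_r (n i : nat) (r : seq (seq bool)) : rat :=
  eps_r n i r + hpair n i (wt_r n r).

Fixpoint e_r (n i : nat) (r : seq (seq bool)) : option (seq (seq bool)) :=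
  match r with
  | [::] => None
  | b :: r' =>
      if eps_spin n i b <= phi_r n i r'
      then omap (fun r'' => b :: r'') (e_r n i r')
      else omap (fun b' => b' :: r') (e_spin n i b)
  end.

Definition wt_word (n : nat) (w : seq (seq bool)) := wt_r n (rev w).
Definition e_word (n i : nat) (w : seq (seq bool)) := omap (@rev _) (e_r n i (rev w)).

Definition word_of (n N : nat) (w : N.-tuple (n.-tuple bool)) : seq (seq bool) :=
  [seq val x | x <- w].

(* Multiplicity of B(lambda) in B(omega_n)^{(x) N}, lambda = sum_k c_k eps_(k+1):
   the number of highest weight elements (e_i b undefined for all i) of
   weight lambda. *)
Definition spin_mult (n N : nat) (c : 'I_n -> nat) : nat :=
  #|[set w : N.-tuple (n.-tuple bool) |
      [forall i : 'I_n, e_word n i (word_of w) == None] &&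
      [forall k : 'I_n, wt_word n (word_of w) k == (c k)%:R]]|.

(* Entries a(i,j), b(i,j) for 1-based i = i0+1, j = j0+1. *)
Definition cat_a (n m : nat) (c : 'I_n -> nat) (i j : 'I_n) : int :=
  (2 * n)%:Z - (i.+1)%:Z - (j.+1)%:Z + m%:Z + (c j)%:Z.
Definition cat_b (n m : nat) (c : 'I_n -> nat) (i j : 'I_n) : int :=
  (j.+1)%:Z - (i.+1)%:Z + m%:Z - (c j)%:Z.

(* Main.v *)
Require Import Defs.
From mathcomp Require Import all_boot all_order all_algebra all_fingroup.
From mathcomp Require Import zify ring lra.
Set Implicit Arguments. Unset Strict Implicit. Unset Printing Implicit Defensive.
Import Order.TTheory GRing.Theory Num.Theory.
Local Open Scope ring_scope.


Fixpoint W (L : nat) (y : int) : int :=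
  match L with
  | 0%N => if y == 0 then 1 else 0
  | L'.+1 => if y < 0 then 0 else W L' (y - 1) + W L' (y + 1)
  end.

Lemma W_neg L y : y < 0 -> W L y = 0.
Proof. case: L => [|L] /= hy; first by case: eqP => // e; rewrite e ltxx in hy. by rewrite hy. Qed.

Lemma W_big L y : (L%:Z < y) -> W L y = 0.
Proof.
elim: L y => [|L IH] y /= hy; first by case: eqP => // e; rewrite e ltxx in hy.
case: ifP => // _; rewrite !IH //; lia.
Qed.

Lemma W_diag L : W L L = 1.
Proof.
elim: L => [|L IH] //=.
have -> : L.+1%:Z - 1 = L by lia. by rewrite IH W_big ?addr0 //; lia.
Qed.

Definition bz (N : nat) (k : int) : int := if k < 0 then 0 else ('C(N, `|k|%N))%:Z.

Lemma bzS N k : bz N.+1 k = bz N k + bz N (k - 1).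
Proof.
rewrite /bz. case: (ltP k 0) => hk.
  have -> : (k - 1 < 0) = true by lia. by rewrite addr0.
case: (ltP (k - 1) 0) => hk1.
  have -> : k = 0 by lia. by rewrite !bin0 addr0.
have -> : `|k|%N = (`|k - 1|%N).+1 by lia.
by rewrite binS PoszD addrC.
Qed.

Lemma catE (a b : nat) : (b <= a)%N ->
  Cat a b = bz (a + b) b - bz (a + b) (b%:Z - 1).
Proof.
move=> hba. rewrite /Cat /bz. have -> : (0 <= b%:Z) && (b%:Z <= a%:Z) = true by lia.
rewrite /catn /=. case: b hba => [|b] hba /=.
  by rewrite bin0.
have -> : (b.+1 - 1 = b)%N by lia.
have le : ('C(a + b.+1, b) <= 'C(a + b.+1, b.+1))%N.
  have := mul_bin_left (a + b.+1) b.
  have -> : (a + b.+1 - b = a.+1)%N by lia.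
  move=> e. rewrite -(@leq_pmul2l b.+1) // e leq_mul2r. apply/orP; right; lia.
by rewrite subzn.
Qed.

Lemma Cat_out A B : (B < 0) || (A < B) -> Cat A B = 0.
Proof. rewrite /Cat => h. have -> : (0 <= B) && (B <= A) = false by lia. by []. Qed.

Lemma Cat_rec A B : B <= A -> 1 <= A + B -> Cat A B = Cat (A - 1) B + Cat A (B - 1).
Proof.
move=> hBA hL.
case: (ltP B 0) => hB.
  by rewrite !Cat_out //; apply/orP; left; lia.
have [a ea] : exists a : nat, A = a.+1%:Z by exists (`|A - 1|%N); lia.
have [b eb] : exists b : nat, B = b%:Z by exists `|B|%N; lia.
subst A B.
have -> : a.+1%:Z - 1 = a by lia.
case: b hBA hL hB => [|b] hBA hL hB.
  rewrite (Cat_out (A := a.+1) (B := Posz 0 - 1)) ?addr0; last by apply/orP; left; lia.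
  rewrite !catE //= /bz /=. by rewrite !bin0.
have -> : b.+1%:Z - 1 = b by lia.
case: (leqP b.+1 a) => hba.
  rewrite !catE //; try lia.
  have -> : (a.+1 + b.+1 = (a + b.+1).+1)%N by lia.
  have -> : (a.+1 + b = a + b.+1)%N by lia.
  set N := (a + b.+1)%N. rewrite !(bzS N). have -> : b.+1%:Z - 1 = b by lia. ring.
have eab : a = b by lia. subst a.
rewrite (Cat_out (A := b)); last by apply/orP; right; lia.
rewrite (catE (leqnn _)) (catE (leqnSn _)).
have -> : (b.+1 + b.+1 = (b.+1 + b).+1)%N by lia.
have eS : bz (b.+1 + b) b.+1 = bz (b.+1 + b) b.
  rewrite /bz. have -> : (b.+1%:Z < 0) = false by lia. have -> : (b%:Z < 0) = false by lia.
  rewrite /= -(bin_sub (n := (b.+1 + b)%N) (m := b)); last by lia.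
  by have -> : (b.+1 + b - b = b.+1)%N by lia.
move: eS. set N := (b.+1 + b)%N. move=> eS.
rewrite !(bzS N). have -> : b.+1%:Z - 1 = b by lia. rewrite eS. ring.
Qed.

Lemma W_Cat L A B : A + B = L%:Z -> B <= A -> W L (A - B) = Cat A B.
Proof.
elim: L A B => [|L IH] A B hL hBA /=.
  case: eqP => e.
    have -> : A = 0 by lia. have -> : B = 0 by lia. by [].
  by rewrite Cat_out //; apply/orP; left; lia.
have -> : (A - B < 0) = false by lia.
rewrite Cat_rec //; last by lia.
have -> : A - B + 1 = A - (B - 1) by lia.
rewrite (IH A (B - 1)); [|lia|lia].
case: (leP B (A - 1)) => h.
  have -> : A - B - 1 = (A - 1) - B by lia.
  rewrite (IH (A - 1) B) //; lia.
rewrite W_neg; last by lia.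
by rewrite (Cat_out (A := A - 1) (B := B)) ?add0r //; apply/orP; right; lia.
Qed.


Definition Mx (n N : nat) (y : nat -> int) : 'M[int]_n :=
  \matrix_(i < n, j < n) W (N + 2 * (n - j.+1))%N (y i).

Definition sgb (t : bool) : int := if t then 1 else -1.

Definition chamber (n : nat) (y : nat -> int) : bool :=
  [forall k : 'I_n, if (k.+1 < n)%N then y k.+1 + 2 <= y k else 0 <= y k].

Lemma det_sum_rows n (F : 'I_n -> bool -> 'I_n -> int) :
  \det (\matrix_(i, j) \sum_(t : bool) F i t j) =
  \sum_(b : n.-tuple bool) \det (\matrix_(i, j) F i (tnth b i) j).
Proof.
rewrite {1}/determinant.
transitivity (\sum_(s : 'S_n) (-1) ^+ s *
   \sum_(f : {ffun 'I_n -> bool}) \prod_i F i (f i) (s i)).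
  apply: eq_bigr => s _; congr (_ * _).
  rewrite (eq_bigr (fun i => \sum_(t : bool) F i t (s i))); last by move=> i _; rewrite mxE.
  by rewrite bigA_distr_bigA.
rewrite (eq_bigr _ (fun s _ => mulr_sumr _ _ _ _)) exchange_big /=.
rewrite (reindex (fun f : {ffun 'I_n -> bool} => [tuple f i | i < n])) /=.
  apply: eq_bigr => f _; rewrite /determinant; apply: eq_bigr => s _.
  congr (_ * _); apply: eq_bigr => i _; by rewrite mxE tnth_mktuple.
exists (fun b : n.-tuple bool => [ffun i => tnth b i]) => x _.
  by apply/ffunP => i; rewrite ffunE tnth_mktuple.
by apply: eq_from_tnth => i; rewrite tnth_mktuple ffunE.
Qed.

Lemma det_step n N (y : nat -> int) : (forall i, (i < n)%N -> 0 <= y i) ->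
  \det (Mx n N.+1 y) =
  \sum_(b : n.-tuple bool) \det (Mx n N (fun k => y k - sgb (nth false b k))).
Proof.
move=> hy.
have -> : Mx n N.+1 y = \matrix_(i, j) \sum_(t : bool)
    W (N + 2 * (n - j.+1))%N (y i - sgb t).
  apply/matrixP => i j; rewrite !mxE big_bool /=.
  have -> : (y i < 0) = false by have := hy i (ltn_ord i); lia.
  by rewrite opprK.
rewrite det_sum_rows; apply: eq_bigr => b _; congr (\det _).
by apply/matrixP => i j; rewrite !mxE (tnth_nth false).
Qed.

Lemma det_eqrows n N (y : nat -> int) (i1 i2 : 'I_n) :
  i1 != i2 -> y i1 = y i2 -> \det (Mx n N y) = 0.
Proof.
move=> ne e; apply: (determinant_alternate ne) => j; by rewrite !mxE e.
Qed.

Lemma det_negrow n N (y : nat -> int) (i : 'I_n) : y i < 0 -> \det (Mx n N y) = 0.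
Proof.
move=> h; rewrite (expand_det_row _ i) big1 // => j _.
by rewrite mxE W_neg ?mul0r.
Qed.

Lemma chamber_at n y k : chamber n y -> (k < n)%N ->
  if (k.+1 < n)%N then y k.+1 + 2 <= y k else 0 <= y k.
Proof. by move=> /forallP H hk; have := H (Ordinal hk). Qed.

Lemma chamber_lb n y : chamber n y -> forall k, (k < n)%N -> (2 * (n - k.+1))%N%:Z <= y k.
Proof.
move=> hc.
have main : forall d k, (k + d).+1 = n -> (2 * d)%N%:Z <= y k.
  elim=> [|d IH] k hk.
    have hk1 : k.+1 = n by lia. have := chamber_at hc (k := k); rewrite hk1 ltnn; move/(_ ltac:(lia)).
    by rewrite muln0.
  have := chamber_at hc (k := k). have -> : (k.+1 < n)%N by lia.
  move/(_ (ltac:(lia))). have := IH k.+1 ltac:(lia). lia.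
move=> k hk; apply: main; lia.
Qed.

Lemma det_base n (y : nat -> int) : chamber n y ->
  \det (Mx n 0 y) = if [forall k : 'I_n, y k == (2 * (n - k.+1))%N%:Z] then 1 else 0.
Proof.
move=> hc; have lb := chamber_lb hc.
rewrite det_trig; last first.
  apply/is_trig_mxP => i j hij; rewrite mxE W_big //.
  have := lb i (ltn_ord i). have := ltn_ord j. lia.
case: ifP => [/forallP H|/negbT].
  by apply: big1 => i _; rewrite mxE (eqP (H i)) add0n W_diag.
rewrite negb_forall => /existsP [k hk].
rewrite (bigD1 k) //= mxE W_big ?mul0r //.
have := lb k (ltn_ord k). move: hk. lia.
Qed.


Fixpoint posi (n : nat) (r : seq (seq bool)) : nat -> int :=
  match r with
  | [::] => fun k => (2 * (n - k.+1))%N%:Z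
  | b :: r' => fun k => posi n r' k + sgb (nth false b k)
  end.

Fixpoint hwc (n : nat) (r : seq (seq bool)) : bool :=
  match r with
  | [::] => true
  | b :: r' => hwc n r' && chamber n (posi n (b :: r'))
  end.

Definition cnt (n N : nat) (y : nat -> int) : int :=
  \sum_(r : N.-tuple (n.-tuple bool))
    (if hwc n (map val r) && [forall k : 'I_n, posi n (map val r) k == y k] then 1 else 0).

Lemma sum_tupleS (T : finType) N (G : N.+1.-tuple T -> int) :
  \sum_(r : N.+1.-tuple T) G r = \sum_(b : T) \sum_(r : N.-tuple T) G [tuple of b :: r].
Proof.
rewrite pair_big /= (reindex (fun p : T * N.-tuple T => [tuple of p.1 :: p.2])) //=.
exists (fun t : N.+1.-tuple T => (thead t, [tuple of behead t])) => [[b r] _ | t _] /=.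
  by rewrite theadE; congr (_, _); apply: val_inj.
by rewrite -tuple_eta.
Qed.

Lemma chamber_ext n (y z : nat -> int) : (forall k, (k < n)%N -> y k = z k) ->
  chamber n y = chamber n z.
Proof.
move=> e; apply: eq_forallb => k; case: ifP => h.
  by rewrite !e.
by rewrite e.
Qed.

Lemma hwc_chamber n r : hwc n r -> chamber n (posi n r).
Proof.
case: r => [|b r] /=.
  move=> _; apply/forallP => k; case: ifP => h; lia.
by case/andP.
Qed.

Lemma cnt_out n N z : ~~ chamber n z -> cnt n N z = 0.
Proof.
move=> hz; apply: big1 => r _; case: ifP => // /andP [/hwc_chamber hc /forallP H].
exfalso; move/negP: hz; apply; rewrite -(chamber_ext (y := posi n (map val r))) //.
by move=> k hk; apply/eqP; exact: (H (Ordinal hk)).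
Qed.

Lemma cnt_step n N y : chamber n y ->
  cnt n N.+1 y = \sum_(b : n.-tuple bool) cnt n N (fun k => y k - sgb (nth false b k)).
Proof.
move=> hy; rewrite /cnt sum_tupleS; apply: eq_bigr => b _; apply: eq_bigr => r _ /=.
set R := map val r.
have E : [forall k : 'I_n, posi n R k + sgb (nth false b k) == y k] =
         [forall k : 'I_n, posi n R k == y k - sgb (nth false b k)].
  apply: eq_forallb => k; apply/eqP/eqP => h; lia.
rewrite E; case: (boolP [forall k : 'I_n, posi n R k == y k - sgb (nth false b k)]) => H.
  rewrite !andbT (chamber_ext (z := y)) ?hy ?andbT // => k hk.
  have := eqP (forallP H (Ordinal hk)) => /= ->; ring.
by rewrite !andbF.
Qed.

Lemma cnt_det n N y : chamber n y ->
  (forall k, (k < n)%N -> exists d : int, y k = 2 * d + N%:Z) ->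
  cnt n N y = \det (Mx n N y).
Proof.
elim: N y => [|N IH] y hy hp.
  rewrite det_base // /cnt (big_pred1 [tuple]) /=; last first.
    move=> r; symmetry; apply/eqP; exact: tuple0.
  congr (if _ then _ else _); apply: eq_forallb => k; by rewrite eq_sym.
rewrite cnt_step // det_step; last first.
  move=> i hi; have := chamber_lb hy hi; lia.
apply: eq_bigr => b _.
set z := fun k => y k - sgb (nth false b k).
case: (boolP (chamber n z)) => hz.
  apply: IH => // k hk; have [d hd] := hp k hk.
  exists (if nth false b k then d else d + 1); rewrite /z /sgb; case: nth; lia.
rewrite cnt_out //; symmetry.
move: hz; rewrite negb_forall => /existsP [k].
case: ifP => hk1 hk.
  have [d1 hd1] := hp k (ltn_ord k).
  have [d2 hd2] := hp k.+1 hk1.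
  have hyk := chamber_at hy (ltn_ord k); rewrite hk1 in hyk.
  apply: (@det_eqrows _ _ _ k (Ordinal hk1)).
    by rewrite -val_eqE /= neq_ltn ltnSn.
  move: hk; rewrite /z /=; case: (nth false b k); case: (nth false b k.+1); rewrite /sgb; lia.
apply: (@det_negrow _ _ _ k); move: hk; lia.
Qed.


Lemma intr_natz (k : nat) : ((k%:Z)%:~R : rat) = k%:R.
Proof. by rewrite -pmulrn. Qed.

Lemma wt_posi n R k : (k < n)%N ->
  wt_r n R k * 2 = (posi n R k)%:~R - 2 * (n - k.+1)%:R.
Proof.
move=> hk; elim: R => [|b R IH] /=.
  by rewrite intr_natz natrM; ring.
rewrite intrD mulrDl IH /wt_spin hk /sgb; case: nth => /=; lra.
Qed.

Lemma hpairD n i (f g : nat -> rat) :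
  hpair n i (fun k => f k + g k) = hpair n i f + hpair n i g.
Proof. rewrite /hpair; case: ifP => _; ring. Qed.

Lemma eps_spin01 n i b : (eps_spin n i b == 0) || (eps_spin n i b == 1).
Proof. by rewrite /eps_spin; case: e_spin. Qed.

Lemma eps_spin_None n i b : (e_spin n i b == None) = (eps_spin n i b == 0).
Proof. by rewrite /eps_spin; case: e_spin => //= _; rewrite oner_eq0. Qed.

Lemma phi_spin_ge0 n (i : 'I_n) b : 0 <= eps_spin n i b + hpair n i (wt_spin n b).
Proof.
rewrite /eps_spin /e_spin /hpair /wt_spin.
case: ifP => hi.
  rewrite ltn_ord.
  by case: (nth false b i); case: (nth false b i.+1) => /=; lra.
rewrite ltn_ord; by case: (nth false b i) => /=; lra.
Qed.

Lemma eps_r_ge0 n i R : 0 <= eps_r n i R.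
Proof. elim: R => [|b R IH] //=. by rewrite le_max IH. Qed.

Lemma phi_r_ge0 n (i : 'I_n) R : 0 <= phi_r n i R.
Proof.
case: R => [|b R]; rewrite /phi_r /=.
  rewrite /hpair; case: ifP => _; lra.
rewrite hpairD.
have h1 : eps_spin n i b - hpair n i (wt_r n R) <= Num.max (eps_r n i R) (eps_spin n i b - hpair n i (wt_r n R)).
  by rewrite le_max lexx orbT.
have := phi_spin_ge0 i b. lra.
Qed.

Lemma e_r_None n (i : 'I_n) R : (e_r n i R == None) = (eps_r n i R == 0).
Proof.
elim: R => [|b R IH] //=.
have e0 := eps_r_ge0 n i R.
case: ifP => h.
  have -> : Num.max (eps_r n i R) (eps_spin n i b - hpair n i (wt_r n R)) = eps_r n i R.
    apply/max_idPl. move: h; rewrite /phi_r; lra.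
  rewrite -IH. by case: e_r.
have hp := phi_r_ge0 i R.
have hgt : phi_r n i R < eps_spin n i b by rewrite ltNge h.
have -> : Num.max (eps_r n i R) (eps_spin n i b - hpair n i (wt_r n R)) =
   eps_spin n i b - hpair n i (wt_r n R).
  apply/max_idPr. move: hgt; rewrite /phi_r; lra.
have : e_spin n i b != None.
  by rewrite eps_spin_None; apply/eqP => e; move: hgt; rewrite e; lra.
move=> hne; case E: (e_spin n i b) hne => [bb|] //= _. have -> : (Some (bb :: R) == None) = false by []. apply/esym/negbTE/eqP => e; move: hgt e; rewrite /phi_r; lra.
Qed.

Lemma max0 (x y : rat) : 0 <= x -> (Num.max x y == 0) = (x == 0) && (y <= 0).
Proof.
move=> hx; rewrite maxEle; have [h|h] := leP x y.
  apply/eqP/andP => [e|[/eqP e1 e2]].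
    split; [apply/eqP|]; lra.
  lra.
apply/eqP/andP => [e|[/eqP e1 e2]].
  split; [apply/eqP|]; lra.
lra.
Qed.

Lemma eps_r_cons0 n i b R : (eps_r n i (b :: R) == 0) =
  (eps_r n i R == 0) && (eps_spin n i b <= hpair n i (wt_r n R)).
Proof. by rewrite /= max0 ?eps_r_ge0 // subr_le0. Qed.


Lemma cond_arith (A B K : rat) (p q : int) (x0 x1 : bool) :
  A * 2 = p%:~R - 2 * (K + 1) -> B * 2 = q%:~R - 2 * K -> q%:~R + 2 <= p%:~R :> rat ->
  ((if ~~ x0 && x1 then 1 else 0 : rat) <= A - B) =
  ((q + sgb x1 + 2)%:~R <= (p + sgb x0)%:~R :> rat).
Proof.
move=> w0 w1 hc.
have q1 : ((1:int)%:~R : rat) = 1 by [].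
have qm1 : ((-1:int)%:~R : rat) = -1 by [].
have q2 : ((2:int)%:~R : rat) = 2 by [].
rewrite !intrD ?q2 /sgb. case: x0; case: x1; rewrite /= ?q1 ?qm1; apply/idP/idP => H; lra.
Qed.

Lemma cond_arith2 (A : rat) (p : int) (x0 : bool) :
  A * 2 = p%:~R -> (0:int)%:~R <= p%:~R :> rat ->
  ((if ~~ x0 then 1 else 0 : rat) <= 2 * A) = ((0:int)%:~R <= (p + sgb x0)%:~R :> rat).
Proof.
move=> w0 hc.
have q1 : ((1:int)%:~R : rat) = 1 by [].
have qm1 : ((-1:int)%:~R : rat) = -1 by [].
have q0 : ((0:int)%:~R : rat) = 0 by [].
move: hc; rewrite !intrD q0 /sgb => hc; case: x0; rewrite /= ?q1 ?qm1; apply/idP/idP => H; lra.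
Qed.

Definition cat_at n (y : nat -> int) (i : nat) : bool :=
  if (i.+1 < n)%N then y i.+1 + 2 <= y i else 0 <= y i.

Lemma cond_iff n R b (i : 'I_n) : cat_at n (posi n R) i ->
  (eps_spin n i b <= hpair n i (wt_r n R)) = cat_at n (posi n (b :: R)) i.
Proof.
rewrite /cat_at /eps_spin /e_spin /hpair /=. case: ifP => hi1 hc.
  have w0 := wt_posi R (ltn_ord i); have w1 := wt_posi R hi1.
  have eq : (n - i.+1)%N = (n - i.+2 + 1)%N by lia. rewrite eq natrD in w0.
  move: hc; rewrite -(ler_int rat) intrD => hc. rewrite -(ler_int rat).
  have q2 : ((2:int)%:~R : rat) = 2 by [].
  rewrite q2 in hc.
  have H x0 x1 := @cond_arith _ _ _ _ _ x0 x1 w0 w1 hc.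
  case: (nth false b i); case: (nth false b i.+1);
    [exact: (H true true)|exact: (H true false)|exact: (H false true)|exact: (H false false)].
have w0 := wt_posi R (ltn_ord i).
have eq : (n - i.+1)%N = 0%N by lia. rewrite eq mulr0 subr0 in w0.
rewrite -(ler_int rat). move: hc; rewrite -(ler_int rat) => hc.
have H x0 := @cond_arith2 _ _ x0 w0 hc.
by case: (nth false b i); [exact: (H true)|exact: (H false)].
Qed.

Lemma hw_equiv n R : [forall i : 'I_n, eps_r n i R == 0] = hwc n R.
Proof.
elim: R => [|b R IH].
  by apply/forallP => i /=.
have -> : [forall i : 'I_n, eps_r n i (b :: R) == 0] =
  [forall i : 'I_n, eps_r n i R == 0] &&
  [forall i : 'I_n, eps_spin n i b <= hpair n i (wt_r n R)].
  apply/forallP/andP => [H|[/forallP H1 /forallP H2] i].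
    by split; apply/forallP => i; have := H i; rewrite eps_r_cons0 => /andP [].
  by rewrite eps_r_cons0 H1 H2.
rewrite IH /=; case hR: (hwc n R) => //=.
have hc := hwc_chamber hR.
apply: eq_forallb => i; apply: cond_iff.
by have := forallP hc i.
Qed.

Lemma wt_equiv n R (yc : nat -> int) (c : 'I_n -> nat)
  (hy : forall k : 'I_n, yc k = (2 * c k + 2 * (n - k.+1))%N) :
  [forall k : 'I_n, wt_r n R k == (c k)%:R] = [forall k : 'I_n, posi n R k == yc k].
Proof.
apply: eq_forallb => k; have w := wt_posi R (ltn_ord k).
rewrite hy -(eqr_int rat) intr_natz natrD !natrM.
apply/eqP/eqP => h.
  have -> : (posi n R k)%:~R = wt_r n R k * 2 + 2 * (n - k.+1)%:R :> rat by rewrite w; ring.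
  by rewrite h; ring.
have e2 : wt_r n R k * 2 = (c k)%:R * 2 by rewrite w h; ring.
by apply: (mulIf _ e2).
Qed.

Unset Implicit Arguments.
Set Strict Implicit.

Theorem theorem4p4 (n m : nat) (c : 'I_n -> nat)
  (hn : (1 <= n)%N) (hm : (1 <= m)%N)
  (hdom : forall i j : 'I_n, (i <= j)%N -> (c j <= c i)%N) :
  (@spin_mult n (2 * m)%N c)%:Z =
  \det (\matrix_(i < n, j < n) Cat (@cat_a n m c i j) (@cat_b n m c i j)).
Proof.
case: n c hdom hn => [|n] c hdom hn; first by [].
set N := (2 * m)%N.
pose yc := fun k : nat => ((2 * c (inord k) + 2 * (n.+1 - k.+1))%N)%:Z.
have hyc : forall k : 'I_n.+1, yc k = ((2 * c k + 2 * (n.+1 - k.+1))%N)%:Z.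
  by move=> k; rewrite /yc inord_val.
have stepA : (@spin_mult n.+1 N c)%:Z = cnt n.+1 N yc.
  rewrite /spin_mult -sum1dep_card -natz natr_sum big_mkcond /cnt.
  rewrite (reindex_inj (h := fun w : N.-tuple (n.+1.-tuple bool) => [tuple of rev w])); last first.
    by move=> x y /(congr1 val) /= /(congr1 rev); rewrite !revK => /val_inj.
  apply: eq_bigr => r _ /=.
  have -> : word_of [tuple of rev r] = rev (map val r) by rewrite /word_of map_rev.
  set R := map val r.
  have -> : [forall i : 'I_n.+1, e_word n.+1 i (rev R) == None] = hwc n.+1 R.
    rewrite -hw_equiv; apply: eq_forallb => i.
    rewrite /e_word revK -e_r_None; by case: e_r.
  have -> : [forall k : 'I_n.+1, wt_word n.+1 (rev R) k == (c k)%:R] =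
            [forall k : 'I_n.+1, posi n.+1 R k == yc k].
    rewrite /wt_word revK; apply: wt_equiv => k; by rewrite hyc.
  by case: ifP.
have stepB : cnt n.+1 N yc = \det (Mx n.+1 N yc).
  apply: cnt_det.
    apply/forallP => k; case: ifP => hk.
      have hk' : (k.+1 < n.+1)%N by [].
      have hd := hdom (inord k) (inord k.+1).
      rewrite !inordK in hd; try lia.
      have := hd (leqnSn _). rewrite /yc. lia.
    rewrite /yc; lia.
  move=> k hk; exists ((c (inord k) + (n.+1 - k.+1))%N%:Z - m%:Z); rewrite /yc /N; lia.
rewrite stepA stepB -det_tr; congr (\det _); apply/matrixP => i j; rewrite !mxE.
have hi := ltn_ord i; have hj := ltn_ord j.
rewrite hyc.
have -> : ((2 * c j + 2 * (n.+1 - j.+1))%N)%:Z = cat_a m c i j - cat_b m c i j.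
  rewrite /cat_a /cat_b; lia.
apply: W_Cat; rewrite /cat_a /cat_b /N; lia.
Qed.
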